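(* Let $f:\mathcal C_n\to\mathbb R$ with $\mathrm{Lip}(f)=L$, and let $h:\mathbb R\to\mathbb R$ be twice differentiable with $|h''(x)|<B$ for all $x$. Then: (1) for every $y\in\mathcal C_n$, $$\|\nabla(h\circ f)(y)-h'(f(y))\nabla f(y)\|_1\le BL^2n\quad\text{and}\quad\|\nabla(h\circ f)(y)-h'(f(y))\nabla f(y)\|_2\le BL^2\sqrt n;$$ (2) for every $x\in[-1,1]^n$, $$\|\nabla(h\circ f)(x)-h'(f(x))\nabla f(x)\|_1\le2BL^2n^{3/2},$$ where $f(x)$, $\nabla f(x)$ and $\nabla(h\circ f)(x)$ denote the harmonic extensions.
   Context: Notation. $\mathcal C_n=\{-1,1\}^n$. Discrete calculus. $\partial_ig(y)=\tfrac12\big(g(y^{i\to1})-g(y^{i\to-1})\big)$, where $y^{i\to\pm1}$ is $y$ with its $i$-th coordinate set to $\pm1$. $\nabla g=(\partial_1g,\dots,\partial_ng)$ and $\mathrm{Lip}(g)=\max_{i,y}|\partial_ig(y)|$. Harmonic extension. Any $g:\mathcal C_n\to\mathbb R$, including each $\partial_ig$, is extended to $[-1,1]^n$ by its unique multilinear polynomial $\sum_{S}\hat g(S)\prod_{i\in S}x_i$. *)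

(* Defs.v *)
From Stdlib Require Import Reals Lra List.
Import ListNotations.
Open Scope R_scope.

(* Points of R^n are represented as lists of reals of length n. *)

Definition sumR (l : list R) : R := fold_right Rplus 0 l.

Fixpoint cube (n : nat) : list (list R) :=
  match n with
  | O => [ [] ]
  | S m => map (cons 1) (cube m) ++ map (cons (-1)) (cube m)
  end.

(* Subsets S of {0,...,n-1}, encoded as boolean lists of length n. *)
Fixpoint subsets (n : nat) : list (list bool) :=
  match n with
  | O => [ [] ]
  | S m => map (cons true) (subsets m) ++ map (cons false) (subsets m)
  end.

Fixpoint chi (S : list bool) (x : list R) : R :=
  match S, x with
  | b :: S', xi :: x' => (if b then xi else 1) * chi S' x'
  | _, _ => 1
  end.

Definition fourier (n : nat) (g : list R -> R) (S : list bool) : R :=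
  / (2 ^ n) * sumR (map (fun y => g y * chi S y) (cube n)).

Definition harm (n : nat) (g : list R -> R) (x : list R) : R :=
  sumR (map (fun S => fourier n g S * chi S x) (subsets n)).

Fixpoint upd (y : list R) (i : nat) (a : R) : list R :=
  match y, i with
  | [], _ => []
  | _ :: y', O => a :: y'
  | c :: y', S j => c :: upd y' j a
  end.

Definition dpart (i : nat) (g : list R -> R) (y : list R) : R :=
  (g (upd y i 1) - g (upd y i (-1))) / 2.

(* Lip(g) = max_{i,y} |d_i g(y)|  (taken to be 0 when n = 0). *)
Definition Lip (n : nat) (g : list R -> R) : R :=
  fold_right Rmax 0
    (flat_map (fun i => map (fun y => Rabs (dpart i g y)) (cube n)) (seq 0 n)).

Definition in_box (n : nat) (x : list R) : Prop :=
  length x = n /\ Forall (fun t => -1 <= t <= 1) x.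

(* Main.v *)
Require Import Defs.
From Stdlib Require Import Reals Lra Lia List.
Import ListNotations.
Open Scope R_scope.

Lemma mvt_any (f f' : R -> R) (Hd : forall t, derivable_pt_lim f t (f' t)) u v :
  exists xi, f u - f v = f' xi * (u - v) /\ 0 <= (xi - v) * (u - v).
Proof.
  destruct (Rtotal_order u v) as [H|[H|H]].
  - destruct (MVT_cor2 f f' u v H (fun c _ => Hd c)) as [c [Hc1 Hc2]].
    exists c; split; [lra|nra].
  - subst; exists v; split; [ring|nra].
  - destruct (MVT_cor2 f f' v u H (fun c _ => Hd c)) as [c [Hc1 Hc2]].
    exists c; split; [lra|nra].
Qed.

Lemma taylor_up (h h1 h2 : R -> R) K
  (Hh1 : forall x, derivable_pt_lim h x (h1 x))
  (Hh2 : forall x, derivable_pt_lim h1 x (h2 x))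
  (HK : forall x, h2 x <= K) u v :
  h u - h v - h1 v * (u - v) <= K / 2 * (u - v) ^ 2.
Proof.
  set (G := fun t => h t - (h1 v * t + K / 2 * ((t - v) * (t - v)))).
  assert (HG : forall t, derivable_pt_lim G t (h1 t - (h1 v + K * (t - v)))).
  { intro t.
    assert (Hp : derivable_pt_lim (fun t => h1 v * t + K / 2 * ((t - v) * (t - v))) t
                   (h1 v + K * (t - v))).
    { apply derivable_pt_lim_ext with
        (f := (mult_real_fct (h1 v) id + mult_real_fct (K/2) ((id - fct_cte v) * (id - fct_cte v)))%F).
      { intro z; unfold mult_real_fct, plus_fct, mult_fct, minus_fct, id, fct_cte; ring. }
      replace (h1 v + K * (t - v)) with
        (h1 v * 1 + K/2 * ((1 - 0) * (id - fct_cte v)%F t + (id - fct_cte v)%F t * (1 - 0)))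
        by (cbv [minus_fct id fct_cte]; field).
      apply derivable_pt_lim_plus; apply derivable_pt_lim_scal.
      - apply derivable_pt_lim_id.
      - apply derivable_pt_lim_mult; apply derivable_pt_lim_minus;
          (apply derivable_pt_lim_id || apply derivable_pt_lim_const). }
    apply derivable_pt_lim_minus with (f1 := h) (f2 := fun t => h1 v * t + K / 2 * ((t - v) * (t - v))); auto. }
  destruct (mvt_any G _ HG u v) as [xi [E1 E2]].
  set (phi := fun t => h1 t - K * t).
  assert (Hphi : forall t, derivable_pt_lim phi t (h2 t - K)).
  { intro t. unfold phi.
    apply derivable_pt_lim_ext with (f := (h1 - mult_real_fct K id)%F).
    { intro z; unfold minus_fct, mult_real_fct, id; ring. }
    replace (h2 t - K) with (h2 t - K * 1) by ring.
    apply derivable_pt_lim_minus; auto.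
    apply derivable_pt_lim_scal, derivable_pt_lim_id. }
  destruct (mvt_any phi _ Hphi xi v) as [eta [F1 F2]].
  unfold G, phi in *.
  assert (Hk := HK eta).
  assert (h1 xi - (h1 v + K * (xi - v)) = (h2 eta - K) * (xi - v)) by lra.
  assert ((h2 eta - K) * ((xi - v) * (u - v)) <= 0) by nra.
  nra.
Qed.

Lemma taylor_abs (h h1 h2 : R -> R) B
  (Hh1 : forall x, derivable_pt_lim h x (h1 x))
  (Hh2 : forall x, derivable_pt_lim h1 x (h2 x))
  (HB : forall x, Rabs (h2 x) < B) u v :
  Rabs (h u - h v - h1 v * (u - v)) <= B / 2 * (u - v) ^ 2.
Proof.
  assert (U := taylor_up h h1 h2 B Hh1 Hh2 (fun x => Rlt_le _ _ (Rle_lt_trans _ _ _ (Rle_abs _) (HB x))) u v).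
  assert (Lo := taylor_up (fun t => - h t) (fun t => - h1 t) (fun t => - h2 t) B
     (fun x => derivable_pt_lim_opp _ _ _ (Hh1 x)) (fun x => derivable_pt_lim_opp _ _ _ (Hh2 x))
     (fun x => Rlt_le _ _ (Rle_lt_trans _ _ _ (Rle_abs _) (eq_ind _ (fun r => r < B) (HB x) _ (eq_sym (Rabs_Ropp _))))) u v).
  apply Rabs_le; lra.
Qed.

Lemma sumR_app l1 l2 : sumR (l1 ++ l2) = sumR l1 + sumR l2.
Proof. induction l1; simpl; [ring| rewrite IHl1; ring]. Qed.

Lemma sumR_scal {A} (F : A -> R) a l : sumR (map (fun s => a * F s) l) = a * sumR (map F l).
Proof. induction l; simpl; [ring| rewrite IHl; ring]. Qed.

Lemma sumR_add {A} (F G : A -> R) l :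
  sumR (map (fun s => F s + G s) l) = sumR (map F l) + sumR (map G l).
Proof. induction l; simpl; [ring| rewrite IHl; ring]. Qed.

Fixpoint Ex (x : list R) (g : list R -> R) : R :=
  match x with
  | [] => g []
  | a :: x' => (1 + a) / 2 * Ex x' (fun z => g (1 :: z))
               + (1 - a) / 2 * Ex x' (fun z => g (-1 :: z))
  end.

Lemma fourier_cons n g b s :
  fourier (S n) g (b :: s) =
  / 2 * (fourier n (fun z => g (1 :: z)) s
         + (if b then -1 else 1) * fourier n (fun z => g (-1 :: z)) s).
Proof.
  unfold fourier. cbn [cube]. rewrite map_app, sumR_app, !map_map.
  cbn [chi].
  rewrite (map_ext (fun x => g (1 :: x) * ((if b then 1 else 1) * chi s x))
                   (fun x => g (1 :: x) * chi s x)) by (intro; destruct b; ring).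
  rewrite (map_ext (fun x => g (-1 :: x) * ((if b then -1 else 1) * chi s x))
                   (fun x => (if b then -1 else 1) * (g (-1 :: x) * chi s x))) by (intro; ring).
  rewrite sumR_scal. cbn [pow]. rewrite Rinv_mult. ring.
Qed.

Lemma harm_cons n g a x :
  harm (S n) g (a :: x) =
  (1 + a) / 2 * harm n (fun z => g (1 :: z)) x + (1 - a) / 2 * harm n (fun z => g (-1 :: z)) x.
Proof.
  unfold harm. cbn [subsets]. rewrite map_app, sumR_app, !map_map.
  set (F1 := fun s => fourier n (fun z => g (1 :: z)) s * chi s x).
  set (F2 := fun s => fourier n (fun z => g (-1 :: z)) s * chi s x).
  rewrite (map_ext (fun s => fourier (S n) g (true :: s) * chi (true :: s) (a :: x))
                   (fun s => (/2 * a) * F1 s + (- / 2 * a) * F2 s))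
    by (intro; rewrite fourier_cons; unfold F1, F2; cbn [chi]; ring).
  rewrite (map_ext (fun s => fourier (S n) g (false :: s) * chi (false :: s) (a :: x))
                   (fun s => (/2) * F1 s + (/ 2) * F2 s))
    by (intro; rewrite fourier_cons; unfold F1, F2; cbn [chi]; ring).
  rewrite !sumR_add, !sumR_scal. field.
Qed.

Lemma harm_Ex x : forall g, harm (length x) g x = Ex x g.
Proof.
  induction x as [|a x IH]; intro g.
  - unfold harm, fourier; cbn. field.
  - cbn [length]. rewrite harm_cons, !IH. reflexivity.
Qed.

Lemma Ex_ext x : forall g k, (forall z, g z = k z) -> Ex x g = Ex x k.
Proof.
  induction x as [|a x IH]; intros g k H; simpl; [apply H|].
  rewrite (IH _ (fun z => k (1 :: z)) (fun z => H _)), (IH _ (fun z => k (-1 :: z)) (fun z => H _)); reflexivity.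
Qed.

Lemma Ex_add x : forall g k, Ex x (fun z => g z + k z) = Ex x g + Ex x k.
Proof.
  induction x as [|a x IH]; intros g k; simpl; [ring|].
  rewrite (IH (fun z => g (1 :: z)) (fun z => k (1 :: z))),
          (IH (fun z => g (-1 :: z)) (fun z => k (-1 :: z))). ring.
Qed.

Lemma Ex_scal x : forall c g, Ex x (fun z => c * g z) = c * Ex x g.
Proof.
  induction x as [|a x IH]; intros c g; simpl; [ring|].
  rewrite (IH c (fun z => g (1 :: z))), (IH c (fun z => g (-1 :: z))). ring.
Qed.

Lemma Ex_const x : forall c, Ex x (fun _ => c) = c.
Proof.
  induction x as [|a x IH]; intros c; simpl; [ring|].
  rewrite !IH. field.
Qed.

Definition box (x : list R) := Forall (fun t => -1 <= t <= 1) x.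

Lemma cube_cons1 n z : In z (cube n) -> In (1 :: z) (cube (S n)).
Proof. intro H; simpl; apply in_or_app; left; apply in_map; auto. Qed.
Lemma cube_cons2 n z : In z (cube n) -> In (-1 :: z) (cube (S n)).
Proof. intro H; simpl; apply in_or_app; right; apply in_map; auto. Qed.

Lemma Ex_mono x : box x -> forall g k,
  (forall z, In z (cube (length x)) -> g z <= k z) -> Ex x g <= Ex x k.
Proof.
  induction x as [|a x IH]; intros Hb g k H; simpl.
  - apply H; simpl; auto.
  - inversion Hb as [|? ? Ha Hx]; subst.
    assert (Ex x (fun z => g (1 :: z)) <= Ex x (fun z => k (1 :: z))).
    { apply IH; auto. intros z Hz; apply H, cube_cons1; auto. }
    assert (Ex x (fun z => g (-1 :: z)) <= Ex x (fun z => k (-1 :: z))).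
    { apply IH; auto. intros z Hz; apply H, cube_cons2; auto. }
    apply Rplus_le_compat; apply Rmult_le_compat_l; lra.
Qed.

Lemma Ex_sub x g k : Ex x (fun z => g z - k z) = Ex x g - Ex x k.
Proof.
  rewrite (Ex_ext x _ (fun z => g z + (-1) * k z)) by (intro; ring).
  rewrite Ex_add, Ex_scal; ring.
Qed.

Lemma Ex_abs x g : box x -> Rabs (Ex x g) <= Ex x (fun z => Rabs (g z)).
Proof.
  intro Hb. apply Rabs_le; split.
  - replace (- Ex x (fun z => Rabs (g z))) with ((-1) * Ex x (fun z => Rabs (g z))) by ring.
    rewrite <- (Ex_scal x (-1) (fun z => Rabs (g z))).
    apply Ex_mono; auto. intros z _. 
    assert (T := Rle_abs (-(g z))); rewrite Rabs_Ropp in T; lra.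
  - apply Ex_mono; auto. intros z _; apply Rle_abs.
Qed.

Lemma Ex_sq x g c : Ex x (fun z => (g z - c) ^ 2) = Ex x (fun z => g z ^ 2) - 2 * c * Ex x g + c ^ 2.
Proof.
  rewrite (Ex_ext x _ (fun z => g z ^ 2 + ((-2 * c) * g z + c ^ 2))) by (intro; ring).
  rewrite Ex_add, Ex_add, Ex_scal, Ex_const; ring.
Qed.

Definition LipP n (g : list R -> R) L :=
  forall z, In z (cube n) -> forall i, (i < n)%nat ->
    Rabs (g (upd z i 1) - g (upd z i (-1))) <= 2 * L.

Lemma variance x : box x -> forall g L, LipP (length x) g L ->
  Ex x (fun z => g z ^ 2) - (Ex x g) ^ 2 <= INR (length x) * L ^ 2.
Proof.
  induction x as [|a x IH]; intros Hb g L HL.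
  - simpl. lra.
  - inversion Hb as [|? ? Ha Hx]; subst. cbn [Ex length].
    set (g1 := fun z => g (1 :: z)). set (g2 := fun z => g (-1 :: z)).
    assert (H1 : Ex x (fun z => g1 z ^ 2) - Ex x g1 ^ 2 <= INR (length x) * L ^ 2).
    { apply IH; auto. intros z Hz i Hi. unfold g1.
      apply (HL (1 :: z) (cube_cons1 _ _ Hz) (S i)); simpl; lia. }
    assert (H2 : Ex x (fun z => g2 z ^ 2) - Ex x g2 ^ 2 <= INR (length x) * L ^ 2).
    { apply IH; auto. intros z Hz i Hi. unfold g2.
      apply (HL (-1 :: z) (cube_cons2 _ _ Hz) (S i)); simpl; lia. }
    assert (H3 : Rabs (Ex x g1 - Ex x g2) <= 2 * L).
    { rewrite <- Ex_sub. eapply Rle_trans; [apply Ex_abs; auto|].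
      rewrite <- (Ex_const x (2 * L)). apply Ex_mono; auto.
      intros z Hz. apply (HL (1 :: z) (cube_cons1 _ _ Hz) 0%nat); simpl; lia. }
    change (Ex x (fun z => g (1 :: z) ^ 2)) with (Ex x (fun z => g1 z ^ 2)).
    change (Ex x (fun z => g (-1 :: z) ^ 2)) with (Ex x (fun z => g2 z ^ 2)).
    change (Ex x (fun z => g (1 :: z))) with (Ex x g1).
    change (Ex x (fun z => g (-1 :: z))) with (Ex x g2).
    rewrite S_INR.
    set (m1 := Ex x g1) in *. set (m2 := Ex x g2) in *.
    assert (Hsq : (m1 - m2) ^ 2 <= 4 * L ^ 2).
    { assert (0 <= Rabs (m1 - m2)) by apply Rabs_pos.
      rewrite <- (pow2_abs (m1 - m2)). nra. }
    set (p := (1 + a) / 2). set (q := (1 - a) / 2).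
    assert (0 <= p) by (unfold p; lra). assert (0 <= q) by (unfold q; lra).
    assert (p + q = 1) by (unfold p, q; field).
    assert (p * q <= / 4) by (replace (p * q) with ((1 - a * a) / 4) by (unfold p, q; field); assert (0 <= a * a) by nra; lra).
    assert (Hid : p * m1 ^ 2 + q * m2 ^ 2 - (p * m1 + q * m2) ^ 2 = p * q * (m1 - m2) ^ 2).
    { replace q with (1 - p) by lra. ring. }
    assert (p * q * (m1 - m2) ^ 2 <= L ^ 2).
    { assert (0 <= (m1 - m2)^2) by apply pow2_ge_0. assert (0 <= p * q) by (apply Rmult_le_pos; lra). apply Rle_trans with (/4 * (4 * L^2)); [|lra]. apply Rmult_le_compat; lra. }
    assert (E1 : p * Ex x (fun z => g1 z ^ 2) <= p * (m1 ^ 2 + INR (length x) * L ^ 2))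
      by (apply Rmult_le_compat_l; lra).
    assert (E2 : q * Ex x (fun z => g2 z ^ 2) <= q * (m2 ^ 2 + INR (length x) * L ^ 2))
      by (apply Rmult_le_compat_l; lra).
    assert (p * (INR (length x) * L ^ 2) + q * (INR (length x) * L ^ 2) = INR (length x) * L ^ 2)
      by (replace q with (1 - p) by lra; ring).
    lra.
Qed.

Lemma fold_max_in l r : In r l -> r <= fold_right Rmax 0 l.
Proof.
  induction l as [|b l IH]; simpl; [tauto|].
  intros [->|H]; [apply Rmax_l|]. eapply Rle_trans; [apply IH; auto|apply Rmax_r].
Qed.

Lemma fold_max_pos l : 0 <= fold_right Rmax 0 l.
Proof. induction l; simpl; [lra|]. eapply Rle_trans; [apply IHl|apply Rmax_r]. Qed.

Lemma Lip_bound n f y i : In y (cube n) -> (i < n)%nat -> Rabs (dpart i f y) <= Lip n f.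
Proof.
  intros Hy Hi. unfold Lip. apply fold_max_in. apply in_flat_map.
  exists i; split; [apply in_seq; lia|]. apply in_map_iff; eauto.
Qed.

Lemma LipP_Lip n f : LipP n f (Lip n f).
Proof.
  intros z Hz i Hi. assert (H := Lip_bound n f z i Hz Hi). unfold dpart in H.
  replace (f (upd z i 1) - f (upd z i (-1))) with (2 * ((f (upd z i 1) - f (upd z i (-1))) / 2)) by field.
  rewrite Rabs_mult, Rabs_right by lra. lra.
Qed.

Lemma cube_upd n : forall y i, In y (cube n) -> (i < n)%nat -> upd y i 1 = y \/ upd y i (-1) = y.
Proof.
  induction n as [|n IH]; intros y i Hy Hi; [lia|].
  simpl in Hy. apply in_app_or in Hy.
  destruct Hy as [Hy|Hy]; apply in_map_iff in Hy; destruct Hy as [z [<- Hz]];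
  destruct i as [|i]; simpl; auto;
  (destruct (IH z i Hz ltac:(lia)) as [E|E]; rewrite E; auto).
Qed.


Lemma point1 (f : list R -> R) (h h1 h2 : R -> R) (B : R) (Hh1 : forall x, derivable_pt_lim h x (h1 x)) (Hh2 : forall x, derivable_pt_lim h1 x (h2 x)) (HB : forall x, Rabs (h2 x) < B) n y i : In y (cube n) -> (i < n)%nat ->
  Rabs (dpart i (fun z => h (f z)) y - h1 (f y) * dpart i f y) <= B * Lip n f ^ 2.
Proof.
  intros Hy Hi. assert (Hd := Lip_bound n f y i Hy Hi).
  set (L := Lip n f) in *. unfold dpart in *.
  set (a := f (upd y i 1)) in *. set (b := f (upd y i (-1))) in *.
  assert (Hab : (a - b) ^ 2 <= 4 * L ^ 2).
  { replace (a - b) with (2 * ((a - b) / 2)) by field.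
    rewrite <- (pow2_abs (2 * ((a - b) / 2))), Rabs_mult, Rabs_right by lra.
    assert (0 <= Rabs ((a - b) / 2)) by apply Rabs_pos. nra. }
  assert (0 < B) by (assert (T := HB 0); assert (T2 := Rabs_pos (h2 0)); lra).
  destruct (cube_upd n y i Hy Hi) as [E|E].
  - assert (Fy : f y = a) by (unfold a; rewrite E; reflexivity). rewrite Fy. assert (T := taylor_abs h h1 h2 B Hh1 Hh2 HB b a).
    replace ((h a - h b) / 2 - h1 a * ((a - b) / 2)) with (- ((h b - h a - h1 a * (b - a)) / 2)) by field.
    rewrite Rabs_Ropp; unfold Rdiv at 1; rewrite Rabs_mult, (Rabs_right (/2)) by lra.
    replace ((b - a) ^ 2) with ((a - b) ^ 2) in T by ring.
    apply Rmult_le_reg_r with 2; [lra|]. field_simplify. nra.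
  - assert (Fy : f y = b) by (unfold b; rewrite E; reflexivity). rewrite Fy. assert (T := taylor_abs h h1 h2 B Hh1 Hh2 HB a b).
    replace ((h a - h b) / 2 - h1 b * ((a - b) / 2)) with ((h a - h b - h1 b * (a - b)) / 2) by field.
    unfold Rdiv at 1; rewrite Rabs_mult, (Rabs_right (/2)) by lra.
    apply Rmult_le_reg_r with 2; [lra|]. field_simplify. nra.
Qed.

Lemma h1_lip (h1 h2 : R -> R) (B : R) (Hh2 : forall x, derivable_pt_lim h1 x (h2 x)) (HB : forall x, Rabs (h2 x) < B) u v : Rabs (h1 u - h1 v) <= B * Rabs (u - v).
Proof.
  destruct (mvt_any h1 h2 Hh2 u v) as [xi [E _]]. rewrite E, Rabs_mult.
  apply Rmult_le_compat_r; [apply Rabs_pos|]. apply Rlt_le, HB.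
Qed.

Lemma point2 (f : list R -> R) (h h1 h2 : R -> R) (B : R) (Hh1 : forall x, derivable_pt_lim h x (h1 x)) (Hh2 : forall x, derivable_pt_lim h1 x (h2 x)) (HB : forall x, Rabs (h2 x) < B) n y i c : In y (cube n) -> (i < n)%nat ->
  Rabs (dpart i (fun z => h (f z)) y - h1 c * dpart i f y)
    <= B * Lip n f ^ 2 + B * Lip n f * Rabs (f y - c).
Proof.
  intros Hy Hi. assert (P := point1 f h h1 h2 B Hh1 Hh2 HB n y i Hy Hi). assert (Hd := Lip_bound n f y i Hy Hi).
  assert (Hh := h1_lip h1 h2 B Hh2 HB (f y) c).
  replace (dpart i (fun z => h (f z)) y - h1 c * dpart i f y) with
    ((dpart i (fun z => h (f z)) y - h1 (f y) * dpart i f y) + (h1 (f y) - h1 c) * dpart i f y) by ring.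
  eapply Rle_trans; [apply Rabs_triang|]. rewrite Rabs_mult.
  assert (0 <= Rabs (h1 (f y) - h1 c)) by apply Rabs_pos.
  assert (0 <= Rabs (dpart i f y)) by apply Rabs_pos.
  assert (Rabs (h1 (f y) - h1 c) * Rabs (dpart i f y) <= B * Rabs (f y - c) * Lip n f).
  { apply Rmult_le_compat; auto. }
  lra.
Qed.


Lemma sum_bound (F : nat -> R) M n : forall s, (forall i, (s <= i < s + n)%nat -> F i <= M) ->
  sumR (map F (seq s n)) <= INR n * M.
Proof.
  induction n as [|n IH]; intros s H; [simpl; lra|].
  rewrite S_INR. cbn [seq map]. unfold sumR; cbn [fold_right]; fold sumR. assert (F s <= M) by (apply H; lia).
  assert (sumR (map F (seq (S s) n)) <= INR n * M) by (apply IH; intros; apply H; lia).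
  change (fold_right Rplus 0 (map F (seq (S s) n))) with (sumR (map F (seq (S s) n))). lra.
Qed.

Lemma e_bound x f : box x ->
  Ex x (fun z => Rabs (f z - Ex x f)) <= Lip (length x) f * sqrt (INR (length x)).
Proof.
  intro Hb. set (c := Ex x f). set (L := Lip (length x) f).
  set (e := Ex x (fun z => Rabs (f z - c))).
  assert (He0 : 0 <= e).
  { unfold e. rewrite <- (Ex_const x 0) at 1. apply Ex_mono; auto. intros; apply Rabs_pos. }
  assert (HL0 : 0 <= L) by apply fold_max_pos.
  assert (Hcs : e ^ 2 <= Ex x (fun z => (f z - c) ^ 2)).
  { assert (H0 : 0 <= Ex x (fun z => (Rabs (f z - c) - e) ^ 2)).
    { rewrite <- (Ex_const x 0) at 1. apply Ex_mono; auto. intros; apply pow2_ge_0. }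
    rewrite Ex_sq in H0. fold e in H0.
    rewrite (Ex_ext x (fun z => Rabs (f z - c) ^ 2) (fun z => (f z - c) ^ 2)) in H0
      by (intro; apply pow2_abs).
    lra. }
  assert (Hv := variance x Hb f L (LipP_Lip _ _)).
  rewrite Ex_sq in Hcs. fold c in Hv, Hcs.
  assert (Hn := pos_INR (length x)).
  assert (e ^ 2 <= INR (length x) * L ^ 2) by lra.
  rewrite <- (sqrt_pow2 e He0), <- (sqrt_pow2 L HL0), <- sqrt_mult by (try apply pow2_ge_0; lra).
  apply sqrt_le_1_alt. lra.
Qed.

Theorem mainTheorem10 (n : nat) (f : list R -> R) (L : R)
  (h h1 h2 : R -> R) (B : R)
  (HL : Lip n f = L)
  (Hh1 : forall x, derivable_pt_lim h x (h1 x))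
  (Hh2 : forall x, derivable_pt_lim h1 x (h2 x))
  (HB : forall x, Rabs (h2 x) < B) :
  (forall y, In y (cube n) ->
     sumR (map (fun i => Rabs (dpart i (fun z => h (f z)) y - h1 (f y) * dpart i f y))
               (seq 0 n)) <= B * L ^ 2 * INR n
     /\
     sqrt (sumR (map (fun i => (dpart i (fun z => h (f z)) y - h1 (f y) * dpart i f y) ^ 2)
               (seq 0 n))) <= B * L ^ 2 * sqrt (INR n))
  /\
  (forall x, in_box n x ->
     sumR (map (fun i => Rabs (harm n (dpart i (fun z => h (f z))) x
                               - h1 (harm n f x) * harm n (dpart i f) x))
               (seq 0 n)) <= 2 * B * L ^ 2 * (INR n * sqrt (INR n))).
Proof.
  assert (HB0 : 0 < B) by (assert (T := HB 0); assert (T2 := Rabs_pos (h2 0)); lra).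
  assert (HL0 : 0 <= L) by (subst L; apply fold_max_pos).
  assert (HBL : 0 <= B * L ^ 2) by (apply Rmult_le_pos; [lra|apply pow2_ge_0]).
  split.
  - intros y Hy. split.
    + rewrite Rmult_comm. apply sum_bound. intros i Hi. subst L.
      apply (point1 f h h1 h2 B Hh1 Hh2 HB n y i Hy); lia.
    + assert (Hs : sumR (map (fun i => (dpart i (fun z => h (f z)) y - h1 (f y) * dpart i f y) ^ 2)
               (seq 0 n)) <= INR n * (B * L ^ 2) ^ 2).
      { apply sum_bound. intros i Hi.
        assert (P := point1 f h h1 h2 B Hh1 Hh2 HB n y i Hy ltac:(lia)). rewrite HL in P.
        rewrite <- pow2_abs. assert (0 <= Rabs (dpart i (fun z => h (f z)) y - h1 (f y) * dpart i f y))
          by apply Rabs_pos. nra. }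
      eapply Rle_trans; [apply sqrt_le_1_alt; exact Hs|].
      rewrite sqrt_mult by (try apply pos_INR; apply pow2_ge_0).
      rewrite sqrt_pow2 by auto. lra.
  - intros x [Hlen Hb]. subst n. fold (box x) in Hb.
    set (c := Ex x f).
    set (e := Ex x (fun z => Rabs (f z - c))).
    assert (He := e_bound x f Hb). fold c e in He. rewrite HL in He.
    assert (Hsum : sumR (map (fun i => Rabs (harm (length x) (dpart i (fun z => h (f z))) x
                               - h1 (harm (length x) f x) * harm (length x) (dpart i f) x))
               (seq 0 (length x))) <= INR (length x) * (B * L ^ 2 + B * L * e)).
    { apply sum_bound. intros i Hi. rewrite !harm_Ex. fold c.
      rewrite <- Ex_scal, <- Ex_sub.
      eapply Rle_trans; [apply Ex_abs; auto|].
      unfold e. rewrite <- (Ex_const x (B * L ^ 2)), <- (Ex_scal x (B * L) (fun z => Rabs (f z - c))), <- Ex_add.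
      apply Ex_mono; auto. intros z Hz. subst L.
      apply (point2 f h h1 h2 B Hh1 Hh2 HB (length x) z i c Hz); lia. }
    eapply Rle_trans; [exact Hsum|].
    set (n := INR (length x)) in *. set (s := sqrt n).
    assert (Hn : 0 <= n) by apply pos_INR.
    assert (Hns : n <= n * s).
    { destruct (length x) eqn:El.
      - unfold n; simpl; lra.
      - assert (1 <= n) by (unfold n; rewrite S_INR; assert (T := pos_INR n0); lra).
        assert (1 <= s) by (unfold s; rewrite <- sqrt_1; apply sqrt_le_1_alt; lra). nra. }
    assert (HBLe : B * L * e <= B * L ^ 2 * s).
    { assert (0 <= B * L) by nra. replace (B * L ^ 2 * s) with (B * L * (L * s)) by ring.
      apply Rmult_le_compat_l; auto. }
    assert (n * (B * L ^ 2 + B * L * e) <= n * (B * L ^ 2 + B * L ^ 2 * s))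
      by (apply Rmult_le_compat_l; lra).
    assert (n * (B * L ^ 2) <= n * s * (B * L ^ 2)) by (apply Rmult_le_compat_r; lra).
    lra.
Qed.
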